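(* Let $n\ge 3$ and let $m,a,b,c$ be integers with $m\ge 0$, $a\ge1$, $b\ge 1$, $c\ge 1$ and $a+b+c=n$. Put $$V=(s_{a+b+1}s_{a+b+2}\cdots s_{n-1})\,(s_ns_{n-1}\cdots s_{a+b+1})\,(s_as_{a-1}\cdots s_2),$$ $$W=(s_{a+b+1}s_{a+b+2}\cdots s_{n-1})\,(s_ns_{n-1}\cdots s_{a+b+1})\,(s_1s_2\cdots s_{a+b-1})\,(s_{a+b}s_{a+b-1}\cdots s_2s_1).$$ Then $$((m+1)^a,m^b,(m+1)^c)=W^m V(\alpha_1).$$ In particular $((m+1)^a,m^b,(m+1)^c)$ is a positive real root.
   Context: Notation: $(x^a,y^b,z^c)$ denotes the vector in $\mathbb{Z}^n$ whose first $a$ entries equal $x$, next $b$ entries equal $y$ and last $c$ entries equal $z$. The simple roots $\alpha_1,\dots,\alpha_n$ are the standard basis vectors of $\mathbb{Z}^n$. For $1\le i\le n$ the simple reflection $s_i:\mathbb{Z}^n\to\mathbb{Z}^n$ is the linear map which changes only the $i$-th coordinate of $v=(v^1,\dots,v^n)$, replacing $v^i$ by $v^{i-1}+v^{i+1}-v^i$, with indices modulo $n$ in $\{1,\dots,n\}$. Products are compositions of maps (the rightmost factor acts first). Convention: an ascending product $s_js_{j+1}\cdots s_l$ with $l<j$ and a descending product $s_ls_{l-1}\cdots s_j$ with $l<j$ are both the identity map. A real root is a vector $s_{i_1}\cdots s_{i_j}(\alpha_k)$; it is positive if its entries are nonnegative. *)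

(* Defs.v *)
(* Vectors of Z^n are row vectors 'rV[int]_n; the paper's
   1-based coordinate i (1 <= i <= n) is the ordinal i-1. *)
From mathcomp Require Import all_boot all_order all_algebra.
Set Implicit Arguments. Unset Strict Implicit. Unset Printing Implicit Defensive.
Import Order.TTheory GRing.Theory Num.Theory.
Local Open Scope ring_scope.

Definition vget (n : nat) (v : 'rV[int]_n) (k : nat) : int :=
  match @insub nat (fun x => x < n)%N _ (k %% n)%N with
  | Some j => v 0 j
  | None => 0
  end.

(* simple reflection s_i (1-based i, 1 <= i <= n): replaces coordinate i by
   v^{i-1} + v^{i+1} - v^i, indices modulo n *)
Definition srefl (n : nat) (i : nat) (v : 'rV[int]_n) : 'rV[int]_n :=
  \row_(j < n) if (j : nat) == (i.-1 %% n)%N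
               then vget v (i + n - 2)%N + vget v i - v 0 j
               else v 0 j.

(* product of reflections listed left to right: [:: i1; ...; ik] acts as
   s_i1 \o ... \o s_ik (rightmost acts first) *)
Definition sprod (n : nat) (w : seq nat) (v : 'rV[int]_n) : 'rV[int]_n :=
  foldr (fun i u => srefl i u) v w.

(* s_j s_{j+1} ... s_l  (empty if l < j) *)
Definition asc (j l : nat) : seq nat := iota j (l.+1 - j).
(* s_l s_{l-1} ... s_j  (empty if l < j) *)
Definition desc (l j : nat) : seq nat := rev (iota j (l.+1 - j)).

Definition alpha (n k : nat) : 'rV[int]_n :=
  \row_(j < n) if (j : nat) == k.-1 then 1 else 0.

Definition real_root (n : nat) (v : 'rV[int]_n) : Prop :=
  exists (w : seq nat) (k : nat),
    (1 <= k <= n)%N /\ all (fun i => 1 <= i <= n)%N w /\ v = sprod w (alpha n k).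

Definition positive_root (n : nat) (v : 'rV[int]_n) : Prop :=
  real_root v /\ forall j, 0 <= v 0 j.

Definition blockvec (n a b : nat) (m : nat) : 'rV[int]_n :=
  \row_(j < n) if ((j < a) || (a + b <= j))%N then (m.+1)%:Z else m%:Z.

Definition Vword (n a b : nat) : seq nat :=
  asc (a + b + 1) (n - 1) ++ desc n (a + b + 1) ++ desc a 2.

Definition Wword (n a b : nat) : seq nat :=
  asc (a + b + 1) (n - 1) ++ desc n (a + b + 1) ++ asc 1 (a + b - 1)
      ++ desc (a + b) 1.

(* Main.v *)
Require Import Defs.
From mathcomp Require Import all_boot all_order all_algebra.
From mathcomp Require Import zify ring.
Set Implicit Arguments. Unset Strict Implicit. Unset Printing Implicit Defensive.
Import Order.TTheory GRing.Theory Num.Theory.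
Local Open Scope ring_scope.

Lemma vget_lt n (v : 'rV[int]_n) q (Hq : (q < n)%N) : vget v q = v 0 (Ordinal Hq).
Proof.
rewrite /vget modn_small //; case: insubP => [j _ Hj|]; last by rewrite Hq.
by congr (v 0 _); apply: val_inj; rewrite /= Hj.
Qed.

Lemma vget_mod n (v : 'rV[int]_n) k : vget v (k %% n) = vget v k.
Proof. by rewrite /vget modn_mod. Qed.

Lemma vget_addn n (v : 'rV[int]_n) k : vget v (k + n) = vget v k.
Proof. by rewrite -vget_mod modnDr vget_mod. Qed.

Lemma vget_n n (v : 'rV[int]_n) : vget v n = vget v 0.
Proof. by have := vget_addn v 0; rewrite add0n. Qed.

Lemma vget_srefl n i (v : 'rV[int]_n) q : (1 <= i <= n)%N -> (q < n)%N ->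
  vget (srefl i v) q = if q == i.-1 then vget v (i + n - 2) + vget v i - vget v i.-1
                       else vget v q.
Proof.
move=> /andP[Hi1 Hin] Hq.
rewrite !(vget_lt _ Hq) mxE /= (@modn_small i.-1); last lia.
case: eqP => // Eq.
by rewrite -Eq (vget_lt v Hq).
Qed.

Lemma up n j d (v : 'rV[int]_n) : (1 <= j)%N -> (j.-1 + d <= n)%N ->
  ((j.-1 + d < n) || (2 <= j))%N -> forall q, (q < n)%N ->
  vget (sprod (rev (iota j d)) v) q =
  if (j.-1 <= q < j.-1 + d)%N then vget v q.+1 + vget v (j + n - 2) - vget v j.-1
  else vget v q.
Proof.
move=> Hj; elim: d => [|d IH] Hd Hw q Hq.
  by rewrite /=; case: ifP => // H; lia.
have IH' := IH ltac:(lia) ltac:(lia).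
rewrite -addn1 iotaD rev_cat /=.
rewrite vget_srefl; last by lia. 2: lia.
set w := sprod _ v.
case: eqP => [->|Hne]; last first.
  rewrite IH' //; case: ifP; case: ifP => //; lia.
have E1 : vget w (j + d).-1 = vget v (j + d).-1.
  by rewrite IH' //; [case: ifP => //; lia | lia].
have E2 : vget w (j + d) = vget v (j + d).
  have [Hlt|Hge] := ltnP (j + d) n.
    by rewrite IH' //; case: ifP => //; lia.
  have -> : (j + d = n)%N by lia.
  rewrite !vget_n IH'; last lia.
  by case: ifP => //; lia.
have E3 : vget w (j + d + n - 2) = vget v (j + d).-1 + vget v (j + n - 2) - vget v j.-1.
  have [Hd0|Hd0] := posnP d.
    subst d; rewrite /w /= !addn0 -subn1 (_ : j - 1 = j.-1)%N; last lia. by lia.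
  have -> : (j + d + n - 2 = (j + d - 2) + n)%N by lia.
  rewrite vget_addn IH'; last lia.
  case: ifP => H; last lia.
  have -> : ((j + d - 2).+1 = (j + d).-1)%N by lia.
  done.
rewrite E1 E2 E3.
case: ifP => H; last lia.
have -> : ((j + d).-1.+1 = j + d)%N by lia.
lia.
Qed.

Lemma down n d j (v : 'rV[int]_n) : (1 <= j)%N -> (j + d <= n)%N ->
  forall q, (q < n)%N ->
  vget (sprod (iota j d) v) q =
  if (j.-1 <= q < j.-1 + d)%N
  then vget v (q + n - 1) + vget v (j.-1 + d) - vget v (j + d - 2)
  else vget v q.
Proof.
elim: d j => [|d IH] j Hj Hd q Hq.
  by rewrite /=; case: ifP => // H; lia.
have IH' := IH j.+1 ltac:(lia) ltac:(lia).
rewrite [iota _ _]/= [sprod _ _]/=.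
rewrite vget_srefl; last by lia. 2: lia.
set w := sprod _ v.
case: eqP => [->|Hne]; last first.
  rewrite IH' //; case: ifP; case: ifP => //; try lia.
  move=> _ _; have -> : (j.+1 + d - 2 = j + d.+1 - 2)%N by lia.
  by have -> : (j.+1.-1 + d = j.-1 + d.+1)%N by lia.
have E1 : vget w j.-1 = vget v j.-1.
  by rewrite IH' //; [case: ifP => //; lia | lia].
have E3 : vget w (j + n - 2) = vget v (j + n - 2).
  have [Hj1|Hj2] := leqP j 1.
    have -> : (j + n - 2 = n - 1)%N by lia.
    by rewrite IH' //; [case: ifP => //; lia | lia].
  have -> : (j + n - 2 = (j - 2) + n)%N by lia.
  by rewrite !vget_addn IH' //; [case: ifP => //; lia | lia].
have E2 : vget w j = vget v j.-1 + vget v (j.-1 + d.+1) - vget v (j + d.+1 - 2).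
  have [Hd0|Hd0] := posnP d.
    subst d; rewrite /w /=.
    have -> : (j.-1 + 1 = j)%N by lia.
    have -> : (j + 1 - 2 = j.-1)%N by lia.
    lia.
  rewrite IH'; last lia.
  case: ifP => H; last lia.
  have -> : (j + n - 1 = j.-1 + n)%N by lia.
  rewrite vget_addn.
  have -> : (j.+1.-1 + d = j.-1 + d.+1)%N by lia.
  by have -> : (j.+1 + d - 2 = j + d.+1 - 2)%N by lia.
rewrite E1 E2 E3.
case: ifP => H; last lia.
have -> : (j.-1 + n - 1 = j + n - 2)%N by lia.
lia.
Qed.

Ltac solve_if := repeat (case: ifP => ? /=); lia.

Lemma sprod_cat n s1 s2 (v : 'rV[int]_n) : sprod (s1 ++ s2) v = sprod s1 (sprod s2 v).
Proof. by rewrite /sprod foldr_cat. Qed.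

Lemma vget_eq n (u v : 'rV[int]_n) : (forall q, (q < n)%N -> vget u q = vget v q) -> u = v.
Proof.
move=> H; apply/rowP => j; have := H j (ltn_ord j).
rewrite !(vget_lt _ (ltn_ord j)).
by have -> : Ordinal (ltn_ord j) = j by apply: val_inj.
Qed.

Section S.
Variables (n a b c : nat).
Hypotheses (Ha : (1 <= a)%N) (Hb : (1 <= b)%N) (Hc : (1 <= c)%N) (Hn : (a + b + c = n)%N).

Lemma tail_ok (P Q : int) (v : 'rV[int]_n) :
  (forall q, (q < n)%N -> vget v q = if (q < a)%N then P else Q) ->
  forall q, (q < n)%N ->
  vget (sprod (asc (a + b + 1) (n - 1) ++ desc n (a + b + 1)) v) q =
  if ((q < a) || (a + b <= q))%N then P else Q.
Proof.
move=> Hv.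
have Y1 : forall q, (q < n)%N -> vget (sprod (desc n (a + b + 1)) v) q =
   if (q < a)%N then P else if (q < n - 1)%N then Q else P.
  move=> q Hq; rewrite /desc up; [|lia|lia|lia|lia].
  have -> : (a + b + 1 + n - 2 = (a + b - 1) + n)%N by lia.
  rewrite vget_addn (Hv (a + b - 1)%N); last lia.
  rewrite (Hv (a + b + 1).-1%N); last lia.
  case: ifP => H; last by rewrite Hv //; solve_if.
  have [Hlt|Hge] := ltnP q.+1 n.
    rewrite Hv //; solve_if.
  have -> : (q.+1 = n)%N by lia.
  rewrite vget_n Hv; [solve_if|lia].
move=> q Hq; rewrite sprod_cat /asc down; [|lia|lia|lia].
case: ifP => H; last by rewrite Y1 //; solve_if.
have -> : (q + n - 1 = (q - 1) + n)%N by lia.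
rewrite vget_addn !Y1; try lia.
solve_if.
Qed.

Lemma headV : forall q, (q < n)%N ->
  vget (sprod (desc a 2) (alpha n 1)) q = if (q < a)%N then 1 else 0.
Proof.
have Hv : forall q, (q < n)%N -> vget (alpha n 1) q = if q == 0%N then 1 else 0.
  by move=> q Hq; rewrite (vget_lt _ Hq) mxE.
move=> q Hq; rewrite /desc up; [|lia|lia|lia|lia].
rewrite (_ : 2 + n - 2 = n)%N; last lia.
rewrite vget_n (Hv 0%N) ?(Hv 1%N) ?(Hv q) ; try lia.
case: ifP => H.
  have [Hlt|Hge] := ltnP q.+1 n.
    rewrite Hv //; solve_if.
  lia.
solve_if.
Qed.

Lemma headW (m : nat) : forall q, (q < n)%N ->
  vget (sprod (asc 1 (a + b - 1) ++ desc (a + b) 1) (blockvec n a b m)) q =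
  if (q < a)%N then (m.+2)%:Z else (m.+1)%:Z.
Proof.
have Hv : forall q, (q < n)%N -> vget (blockvec n a b m) q =
    if ((q < a) || (a + b <= q))%N then (m.+1)%:Z else m%:Z.
  by move=> q Hq; rewrite (vget_lt _ Hq) mxE.
have X1 : forall q, (q < n)%N -> vget (sprod (desc (a + b) 1) (blockvec n a b m)) q =
    if ((q < a.-1) || (a + b - 1 <= q))%N then (m.+1)%:Z else m%:Z.
  move=> q Hq; rewrite /desc up; [|lia|lia|lia|lia].
  rewrite (_ : 1 + n - 2 = n - 1)%N; last lia.
  case: ifP => H; rewrite ?(Hv (n - 1)%N) ?(Hv 0%N) ?(Hv q) ?(Hv q.+1); try lia; solve_if.
move=> q Hq; rewrite sprod_cat /asc down; [|lia|lia|lia].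
case: ifP => H; last by rewrite X1 //; solve_if.
have [Hq0|Hq0] := posnP q.
  subst q; rewrite add0n !X1; try lia.
  solve_if.
have -> : (q + n - 1 = (q - 1) + n)%N by lia.
rewrite vget_addn !X1; try lia.
solve_if.
Qed.

End S.

Lemma all_iota n j d : (1 <= j)%N -> (j + d <= n.+1)%N ->
  all (fun i => 1 <= i <= n)%N (iota j d).
Proof. move=> H1 H2; apply/allP => x; rewrite mem_iota; lia. Qed.

Lemma sprod_flat n (W V : seq nat) m (v : 'rV[int]_n) :
  sprod (flatten (nseq m W) ++ V) v = iter m (sprod W) (sprod V v).
Proof.
elim: m => [|m IH] //=.
by rewrite -catA sprod_cat IH.
Qed.

Theorem theorem4p1 (n m a b c : nat) :
  (3 <= n)%N -> (1 <= a)%N -> (1 <= b)%N -> (1 <= c)%N -> (a + b + c = n)%N ->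
  blockvec n a b m = iter m (sprod (Wword n a b)) (sprod (Vword n a b) (alpha n 1))
  /\ positive_root (blockvec n a b m).
Proof.
move=> H3 Ha Hb Hc Hn.
have E : forall m, blockvec n a b m = iter m (sprod (Wword n a b)) (sprod (Vword n a b) (alpha n 1)).
  elim=> [|k IH] /=.
    rewrite /Vword catA sprod_cat; apply: vget_eq => q Hq.
    rewrite (tail_ok Ha Hb Hc Hn (P := 1) (Q := 0)) //; last first.
      by move=> q' Hq'; exact: (headV Ha Hb Hc Hn Hq').
    by rewrite (vget_lt _ Hq) mxE.
  rewrite -IH /Wword catA sprod_cat; apply: vget_eq => q Hq.
  rewrite (tail_ok Ha Hb Hc Hn (P := (k.+2)%:Z) (Q := (k.+1)%:Z)) //; last first.
    by move=> q' Hq'; exact: (headW Ha Hb Hc Hn k Hq').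
  by rewrite (vget_lt _ Hq) mxE.
split; first exact: E.
split; last by move=> j; rewrite mxE; case: ifP => _; lia.
exists (flatten (nseq m (Wword n a b)) ++ Vword n a b), 1%N.
split; first lia.
split; last by rewrite sprod_flat E.
rewrite all_cat; apply/andP; split.
  elim: m {E} => [|k IH] //=.
  rewrite all_cat IH andbT /Wword !all_cat /asc /desc !all_rev.
  rewrite !all_iota //; lia.
rewrite /Vword !all_cat /asc /desc !all_rev !all_iota //; lia.
Qed.
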